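(* Let $p$ and $p'$ be consecutive patterns of the same length that are both non-overlapping and are interchangeable. Then $p$ and $p'$ are super-strongly Wilf equivalent.
   Context: An inversion sequence of length $n$ is an integer sequence $e=e_1e_2\dots e_n$ with $0\le e_i<i$ for all $i$; $\mathbf{I}_n$ denotes the set of these. A pattern of length $r$ is a sequence $p=p_1\dots p_r$ with $p_i\in\{0,\dots,r-1\}$ such that whenever a value $j>0$ appears in $p$, the value $j-1$ also appears. The reduction of an integer word $w$ is obtained by replacing every occurrence of the $i$-th smallest distinct value of $w$ by $i-1$. An inversion sequence $e$ has an occurrence of the consecutive pattern $p$ in position $i$ if the reduction of $e_i\dots e_{i+r-1}$ equals $p$; $\mathrm{Em}(p,e)$ is the set of such positions. $p=p_1\dots p_r$ is non-overlapping if for every $1<i<r$ the reductions of $p_1\dots p_i$ and $p_{r-i+1}\dots p_r$ differ. Given patterns $p,p'$ of length $r$ with $p_1=p'_1$, $p_r=p'_r$ and $\max_i p_i=\max_i p'_i$, $p$ is changeable for $p'$ if for all $1\le i\le r$, $p'_i\le\max(\{p_j:1\le j\le i\}\cup\{p_j-j+i: i<j\le r\})$; $p$ and $p'$ are interchangeable if each is changeable for the other. Two patterns are super-strongly Wilf equivalent if $|\{e\in\mathbf{I}_n:\mathrm{Em}(p,e)=T\}|=|\{e\in\mathbf{I}_n:\mathrm{Em}(p',e)=T\}|$ for all $n$ and all $T\subseteq[n]$. *)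

(* Defs.v *)
From mathcomp Require Import all_boot.
Set Implicit Arguments. Unset Strict Implicit. Unset Printing Implicit Defensive.

Definition red (w : seq nat) : seq nat :=
  [seq index x (sort leq (undup w)) | x <- w].

Definition is_pattern (r : nat) (p : seq nat) : bool :=
  [&& size p == r, all (fun x => x < r) p &
      all (fun x => (0 < x) ==> (x.-1 \in p)) p].

(* Inversion sequences of length n, e = e_1 ... e_n with 0 <= e_i < i.
   Stored 0-indexed as a tuple over 'I_n: entry k (k = i-1) satisfies e_k <= k. *)
Definition is_invseq (n : nat) (e : n.-tuple 'I_n) : bool :=
  [forall k : 'I_n, nat_of_ord (tnth e k) <= k].

(* Occurrence of p in e at (1-indexed) position i: the window
   e_i ... e_{i+r-1} lies inside e and reduces to p. *)
Definition occurs_at (p e : seq nat) (i : nat) : bool :=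
  (0 < i) && (i + size p - 1 <= size e) &&
  (red (take (size p) (drop i.-1 e)) == p).

(* Em(p,e), listed increasingly as a subset of [n] = {1..n}. *)
Definition Em (p e : seq nat) : seq nat :=
  [seq i <- iota 1 (size e) | occurs_at p e i].

Definition count_Em (p : seq nat) (n : nat) (T : seq nat) : nat :=
  #|[pred e : n.-tuple 'I_n | is_invseq e && (Em p (map val e) == T)]|.

Definition non_overlapping (p : seq nat) : bool :=
  [forall i : 'I_(size p), (1 < i) ==> (red (take i p) != red (drop (size p - i) p))].

Definition pmax (p : seq nat) : nat := \max_(x <- p) x.

(* p changeable for p' (0-indexed, i,j < r):
   p'_i <= max({p_j : j <= i} u {p_j - j + i : i < j}).  Truncated nat
   subtraction is harmless since the max always contains p_i >= 0. *)
Definition changeable (p p' : seq nat) : bool :=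
  [&& size p == size p', head 0 p == head 0 p', last 0 p == last 0 p',
      pmax p == pmax p' &
      [forall i : 'I_(size p),
         nth 0 p' i <= \max_(j < size p)
                         (if j <= i then nth 0 p j else nth 0 p j - (j - i))]].

Definition interchangeable (p p' : seq nat) : bool :=
  changeable p p' && changeable p' p.

Definition super_strongly_Wilf_equiv (p p' : seq nat) : Prop :=
  forall (n : nat) (T : seq nat), count_Em p n T = count_Em p' n T.

(* Main.v *)
Require Import Defs.
From mathcomp Require Import all_boot zify.
Set Implicit Arguments. Unset Strict Implicit. Unset Printing Implicit Defensive.

Definition vals (w : seq nat) := sort leq (undup w).

Lemma vals_sorted w : sorted ltn (vals w).
Proof. by rewrite ltn_sorted_uniq_leq sort_uniq undup_uniq sort_sorted //; exact: leq_total. Qed.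

Lemma vals_uniq w : uniq (vals w).
Proof. by rewrite sort_uniq undup_uniq. Qed.

Lemma mem_vals w x : (x \in vals w) = (x \in w).
Proof. by rewrite mem_sort mem_undup. Qed.

Lemma redE w : red w = [seq index x (vals w) | x <- w].
Proof. by []. Qed.

Lemma nth_ltn (v : seq nat) a b : sorted ltn v -> a < b -> b < size v -> nth 0 v a < nth 0 v b.
Proof.
move=> sv ab bs; apply: (sorted_ltn_nth ltn_trans) => //; rewrite inE //; lia.
Qed.

Lemma nth_leq (v : seq nat) a b : sorted ltn v -> a <= b -> b < size v -> nth 0 v a <= nth 0 v b.
Proof.
move=> sv; rewrite leq_eqVlt => /orP [/eqP -> //|ab] bs.
by apply: ltnW; apply: nth_ltn.
Qed.

Lemma nth_gap (v : seq nat) a b : sorted ltn v -> a <= b -> b < size v -> nth 0 v a + (b - a) <= nth 0 v b.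
Proof.
move=> sv; elim: b => [|b IH] ab bs.
  by move: ab; rewrite leqn0 => /eqP ->; rewrite subnn addn0.
move: ab; rewrite leq_eqVlt => /orP [/eqP -> |ab]; first by rewrite subnn addn0.
have h1 := IH ab (ltnW bs).
have h2 := nth_ltn sv (ltnSn b) bs.
lia.
Qed.

Lemma index_map_in (g : nat -> nat) (s : seq nat) x :
  {in s &, injective g} -> x \in s -> index (g x) (map g s) = index x s.
Proof.
elim: s => [//|y s IH] inj xs /=.
have [->|yx] := eqVneq y x; first by rewrite eqxx.
have gyx : g y != g x.
  apply/eqP => /inj; rewrite !inE eqxx => /(_ isT xs) e; by rewrite e eqxx in yx.
rewrite (negPf gyx); congr S; apply: IH.
  by move=> a b ha hb; apply: inj; rewrite inE ?ha ?hb orbT.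
by move: xs; rewrite inE eq_sym (negPf yx).
Qed.

Definition smono (g : nat -> nat) (s : seq nat) := {in s &, forall a b, a < b -> g a < g b}.

Lemma smono_inj g s : smono g s -> {in s &, injective g}.
Proof.
move=> m a b ha hb e; apply/eqP; rewrite eqn_leq; apply/andP; split; rewrite leqNgt; apply/negP => h.
  by have := m _ _ hb ha h; rewrite e ltnn.
by have := m _ _ ha hb h; rewrite e ltnn.
Qed.

Lemma vals_map g s : smono g s -> vals (map g s) = map g (vals s).
Proof.
move=> m; apply: (irr_sorted_eq ltn_trans ltnn); first exact: vals_sorted.
  apply: (@homo_sorted_in _ _ (mem s)); last exact: vals_sorted.
    by move=> a b ha hb; apply: m.
  by apply/allP => x; rewrite mem_vals.
move=> y; rewrite mem_vals; apply/mapP/mapP => [] [x hx ->]; exists x => //; by rewrite mem_vals in hx *.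
Qed.

Lemma red_map g s : smono g s -> red (map g s) = red s.
Proof.
move=> m; rewrite !redE vals_map // -map_comp; apply/eq_in_map => x xs /=.
apply: index_map_in; last by rewrite mem_vals.
by move=> a b ha hb; apply: (smono_inj m); rewrite -mem_vals.
Qed.

Lemma pat_down r q x y : is_pattern r q -> x \in q -> y <= x -> y \in q.
Proof.
case/and3P=> _ _ /allP cl.
suff H : forall d x, x \in q -> x - d \in q.
  by move=> xq yx; have := H (x - y) x xq; have -> : x - (x - y) = y by lia.
elim=> [|d IH] z zq; first by rewrite subn0.
have := IH z zq; case: (ltnP 0 (z - d)) => h hq.
  have := cl _ hq; rewrite h /= => e; by have -> : z - d.+1 = (z - d).-1 by lia.
by have -> : z - d.+1 = z - d by lia.
Qed.

Lemma pmax_in q : 0 < size q -> pmax q \in q.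
Proof.
case: q => [//|a q] _; rewrite /pmax big_cons.
elim: q a => [|b q IH] a; first by rewrite big_nil maxn0 inE.
rewrite big_cons maxnA; case: (leqP a b) => h.
  by have := IH b; rewrite !inE => /orP [->|->]; rewrite ?orbT.
by have := IH a; rewrite !inE => /orP [->|->]; rewrite ?orbT.
Qed.

Lemma pat_mem r q x : is_pattern r q -> 0 < size q -> (x \in q) = (x <= pmax q).
Proof.
move=> pq sq; apply/idP/idP => h.
  exact: (@leq_bigmax_seq _ q xpredT (fun x => x) x h).
exact: pat_down pq (pmax_in sq) h.
Qed.

Lemma vals_pat r q : is_pattern r q -> 0 < size q -> vals q = iota 0 (pmax q).+1.
Proof.
move=> pq sq; apply: (irr_sorted_eq ltn_trans ltnn); first exact: vals_sorted.
  exact: iota_ltn_sorted.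
by move=> x; rewrite mem_vals mem_iota (pat_mem _ pq sq) add0n ltnS.
Qed.

Lemma index_iota0 m x : x < m -> index x (iota 0 m) = x.
Proof.
move=> h; have := @index_uniq _ 0 x (iota 0 m); rewrite size_iota nth_iota // add0n.
by move=> ->; rewrite ?iota_uniq.
Qed.

Lemma red_pat r q : is_pattern r q -> 0 < size q -> red q = q.
Proof.
move=> pq sq; rewrite redE (vals_pat pq sq).
rewrite -[in RHS](map_id q); apply/eq_in_map => x xq.
by apply: index_iota0; rewrite ltnS -(pat_mem _ pq sq).
Qed.

Lemma red_size w : size (red w) = size w.
Proof. by rewrite redE size_map. Qed.

Lemma red_nth w t : t < size w -> nth 0 w t = nth 0 (vals w) (nth 0 (red w) t).
Proof.
move=> h; rewrite redE (nth_map 0) // nth_index // mem_vals; exact: mem_nth.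
Qed.

Lemma red_decomp w : w = map (nth 0 (vals w)) (red w).
Proof.
apply: (@eq_from_nth _ 0); first by rewrite size_map red_size.
move=> t h; rewrite (nth_map 0) ?red_size //; exact: red_nth.
Qed.

Lemma red_lt w x : x \in red w -> x < size (vals w).
Proof.
rewrite redE => /mapP [y yw ->]; by rewrite index_mem mem_vals.
Qed.

Lemma size_vals r q w : is_pattern r q -> 0 < size q -> red w = q -> size (vals w) = (pmax q).+1.
Proof.
move=> pq sq rw; apply/eqP; rewrite eqn_leq; apply/andP; split; last first.
  by apply: red_lt; rewrite rw; exact: pmax_in.
have sv : 0 < size (vals w).
  by apply: (@leq_ltn_trans (nth 0 q 0)) => //; apply: red_lt; rewrite rw mem_nth.
set i := (size (vals w)).-1.
have iv : i < size (vals w) by rewrite /i; lia.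
have : nth 0 (vals w) i \in w by rewrite -mem_vals mem_nth.
move=> /(nthP 0) [t tw e].
have : nth 0 (red w) t = i.
  by rewrite redE (nth_map 0) // e index_uniq // vals_uniq.
rewrite rw => qi.
have : i \in q by rewrite -qi mem_nth // -rw red_size.
rewrite (pat_mem _ pq sq) /i; lia.
Qed.

Definition win r (es : seq nat) k := take r (drop k es).
Definition cov r k j := (k <= j) && (j < k + r).
Definition covered r (An : seq nat) j := has (fun k => cov r k j) An.
Definition ch r (An : seq nat) j := nth 0 An (find (fun k => cov r k j) An).
Definition newval r (q' An es : seq nat) j :=
  if covered r An j then nth 0 (vals (win r es (ch r An j))) (nth 0 q' (j - ch r An j))
  else nth 0 es j.

Definition good r q (An es : seq nat) n :=
  [&& size es == n, all (fun j => nth 0 es j <= j) (iota 0 n) &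
      all (fun k => (k + r <= n) && (red (win r es k) == q)) An].

Lemma ch_spec r An j : covered r An j -> ch r An j \in An /\ cov r (ch r An j) j.
Proof.
move=> h; split; first by rewrite /ch mem_nth // -has_find.
exact: (nth_find 0 h).
Qed.

Lemma good_size r q An es n : good r q An es n -> size es = n.
Proof. by case/and3P => /eqP. Qed.

Lemma good_inv r q An es n j : good r q An es n -> j < n -> nth 0 es j <= j.
Proof. by case/and3P => _ /allP h _ jn; apply: h; rewrite mem_iota. Qed.

Lemma good_occ r q An es n k : good r q An es n -> k \in An ->
  k + r <= n /\ red (win r es k) = q.
Proof. by case/and3P => _ _ /allP h kA; case/andP: (h k kA) => -> /eqP. Qed.

Lemma size_win r es k : k + r <= size es -> size (win r es k) = r.
Proof. move=> h; rewrite /win size_take size_drop; case: ifP => //; lia. Qed.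

Lemma nth_win r es k t : t < r -> nth 0 (win r es k) t = nth 0 es (k + t).
Proof. by move=> h; rewrite /win nth_take // nth_drop. Qed.


Lemma win_entry r q An es n k t : is_pattern r q -> 0 < r ->
  good r q An es n -> k \in An -> t < r ->
  nth 0 es (k + t) = nth 0 (vals (win r es k)) (nth 0 q t).
Proof.
move=> pq r0 g kA tr; have [kr rw] := good_occ g kA.
rewrite -(@nth_win r es k t) // red_nth ?rw // size_win //; by rewrite (good_size g).
Qed.

Lemma q_lt_vals r q An es n k x : is_pattern r q -> 0 < r ->
  good r q An es n -> k \in An -> x \in q -> x < size (vals (win r es k)).
Proof.
move=> pq r0 g kA xq; have [kr rw] := good_occ g kA.
have sq : 0 < size q by case/and3P: pq => /eqP ->.
by rewrite (size_vals pq sq rw) ltnS -(pat_mem _ pq sq).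
Qed.

Lemma smono_nth (v s : seq nat) : sorted ltn v -> all (fun x => x < size v) s ->
  smono (nth 0 v) s.
Proof. move=> sv /allP h a b ha hb ab; exact: nth_ltn sv ab (h b hb). Qed.

Lemma red_win_map r q An es n k : is_pattern r q -> 0 < r -> good r q An es n -> k \in An ->
  win r es k = map (nth 0 (vals (win r es k))) q.
Proof.
move=> pq r0 g kA; have [kr rw] := good_occ g kA.
by rewrite {1}(red_decomp (win r es k)) rw.
Qed.

Lemma red_sub r q An es n k (f : seq nat -> seq nat) : is_pattern r q -> 0 < r -> good r q An es n -> k \in An ->
  (forall g s, f (map g s) = map g (f s)) -> (forall x, x \in f q -> x \in q) ->
  red (f (win r es k)) = red (f q).
Proof.
move=> pq r0 g kA fm fs; rewrite (red_win_map pq r0 g kA) fm red_map //.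
apply: smono_nth; first exact: vals_sorted.
by apply/allP => x /fs xq; apply: (q_lt_vals pq r0 g kA).
Qed.

Lemma nonov r q An es n k k' : is_pattern r q -> 0 < r -> non_overlapping q ->
  good r q An es n -> k \in An -> k' \in An -> k < k' -> k + r - 1 <= k'.
Proof.
move=> pq r0 no g kA kA' kk; rewrite leqNgt; apply/negP => h.
have sq : size q = r by case/and3P: pq => /eqP.
set d := k' - k; set L := r - d.
have e : drop d (win r es k) = take L (win r es k').
  rewrite /win take_takel; last by rewrite /L; lia.
  have -> : k' = d + k by rewrite /d; lia.
  rewrite -drop_drop [RHS]take_drop; have -> : L + d = r by rewrite /L /d; lia.
  done.
have e1 : red (drop d (win r es k)) = red (drop d q).
  apply: (red_sub (f := drop d)) pq r0 g kA _ _ => [g' s|x]; first by rewrite map_drop.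
  exact: mem_drop.
have e2 : red (take L (win r es k')) = red (take L q).
  apply: (red_sub (f := take L)) pq r0 g kA' _ _ => [g' s|x]; first by rewrite map_take.
  exact: mem_take.
have Lr : L < size q by rewrite sq /L /d; lia.
move/forallP: no => /(_ (Ordinal Lr)) /=.
have -> : 1 < L by rewrite /L /d; lia.
have -> : size q - L = d by rewrite sq /L /d; lia.
by rewrite -e1 -e2 e eqxx.
Qed.

Lemma val_at r q q' An es n k j : is_pattern r q -> 0 < r -> non_overlapping q ->
  good r q An es n -> nth 0 q' 0 = nth 0 q 0 -> nth 0 q' r.-1 = nth 0 q r.-1 ->
  k \in An -> cov r k j ->
  newval r q' An es j = nth 0 (vals (win r es k)) (nth 0 q' (j - k)).
Proof.
move=> pq r0 no g h0 hl kA ckj.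
have cv : covered r An j by apply/hasP; exists k.
rewrite /newval cv; have [cA cc] := ch_spec cv.
move: cA cc; set c := ch r An j => cA cc.
move: ckj cc; rewrite /cov => /andP [h1 h2] /andP [h3 h4].
case: (ltngtP c k) => hck; last by rewrite hck.
- have := nonov pq r0 no g cA kA hck => h5.
  have ej : j = k by lia.
  have e1 : j - c = r.-1 by lia.
  rewrite e1 hl ej subnn h0 -(win_entry pq r0 g cA) ?prednK ?ltn_predL //.
  rewrite -(win_entry pq r0 g kA) //; congr nth; lia.
- have := nonov pq r0 no g kA cA hck => h5.
  have ej : j = c by lia.
  have e1 : j - k = r.-1 by lia.
  rewrite e1 hl ej subnn h0 -(win_entry pq r0 g cA) //.
  rewrite -(win_entry pq r0 g kA) ?ltn_predL //; congr nth; lia.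
Qed.

Lemma newval_le r q q' An es n j : is_pattern r q -> 0 < r -> good r q An es n ->
  [forall i : 'I_(size q), nth 0 q' i <= \max_(j < size q)
                         (if j <= i then nth 0 q j else nth 0 q j - (j - i))] ->
  j < n -> newval r q' An es j <= j.
Proof.
move=> pq r0 g chg jn; rewrite /newval; case: ifP => cv; last exact: good_inv g jn.
have [cA cc] := ch_spec cv; move: cA cc; set c := ch r An j => cA /andP [h1 h2].
have sq : size q = r by case/and3P: pq => /eqP.
have [kr _] := good_occ g cA.
set t := j - c; have tr : t < r by rewrite /t; lia.
set v := vals (win r es c).
have sv : sorted ltn v := vals_sorted _.
have qlt : forall i, i < r -> nth 0 q i < size v.
  by move=> i ir; apply: (q_lt_vals pq r0 g cA); rewrite mem_nth // sq.
have ent : forall i, i < r -> nth 0 v (nth 0 q i) <= c + i.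
  move=> i ir; rewrite -(win_entry pq r0 g cA) //; apply: (good_inv g); lia.
have cand : forall i : 'I_(size q),
    let m := (if i <= t then nth 0 q i else nth 0 q i - (i - t)) in
    m < size v /\ nth 0 v m <= c + t.
  move=> [i ir] /=; rewrite sq in ir; case: ifP => hit.
    split; first exact: qlt.
    by apply: leq_trans (ent _ ir) _; lia.
  split; first by apply: leq_ltn_trans (qlt _ ir); apply: leq_subr.
  case: (leqP (i - t) (nth 0 q i)) => hq.
    have := nth_gap sv (leq_subr (i - t) (nth 0 q i)) (qlt _ ir).
    have := ent _ ir; have -> : nth 0 q i - (nth 0 q i - (i - t)) = i - t by lia.
    lia.
  have -> : nth 0 q i - (i - t) = 0 by lia.
  apply: leq_trans (ent _ tr); apply: nth_leq => //; exact: qlt.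
pose M := \max_(i < size q) (if i <= t then nth 0 q i else nth 0 q i - (i - t)).
have [Mv Mle] : M < size v /\ nth 0 v M <= c + t.
  apply: (big_ind (fun m => m < size v /\ nth 0 v m <= c + t)).
  - split; first by apply: leq_ltn_trans (qlt _ tr).
    apply: leq_trans (ent _ tr); apply: nth_leq => //; exact: qlt.
  - move=> x y [hx1 hx2] [hy1 hy2]; rewrite /maxn; case: ifP => _; by split.
  - by move=> i _; apply: cand.
have tq : t < size q by rewrite sq.
move/forallP: chg => /(_ (Ordinal tq)) /= hM.
apply: leq_trans (nth_leq sv hM Mv) _; apply: leq_trans Mle _; rewrite /t; lia.
Qed.

Lemma newwin r q q' An es n k : is_pattern r q -> is_pattern r q' -> 0 < r -> non_overlapping q ->
  good r q An es n -> nth 0 q' 0 = nth 0 q 0 -> nth 0 q' r.-1 = nth 0 q r.-1 ->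
  k \in An ->
  win r (map (newval r q' An es) (iota 0 n)) k = map (nth 0 (vals (win r es k))) q'.
Proof.
move=> pq pq' r0 no g h0 hl kA.
have sq' : size q' = r by case/and3P: pq' => /eqP.
have [kr _] := good_occ g kA.
rewrite /win -map_drop -map_take drop_iota take_iota add0n.
have -> : minn r (n - k) = r by lia.
apply: (@eq_from_nth _ 0); first by rewrite !size_map size_iota sq'.
move=> t; rewrite size_map size_iota => tr.
rewrite (nth_map 0) ?size_iota // nth_iota // (nth_map 0) ?sq' //.
rewrite (val_at pq r0 no g h0 hl kA); first by congr nth; congr nth; lia.
rewrite /cov; lia.
Qed.

Lemma newocc r q q' An es n k : is_pattern r q -> is_pattern r q' -> 0 < r -> non_overlapping q ->
  good r q An es n -> nth 0 q' 0 = nth 0 q 0 -> nth 0 q' r.-1 = nth 0 q r.-1 ->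
  pmax q' = pmax q -> k \in An ->
  red (win r (map (newval r q' An es) (iota 0 n)) k) = q'.
Proof.
move=> pq pq' r0 no g h0 hl hm kA.
have sq' : 0 < size q' by case/and3P: pq' => /eqP ->.
have sq : 0 < size q by case/and3P: pq => /eqP ->.
have [kr rw] := good_occ g kA.
rewrite (newwin pq pq' r0 no g h0 hl kA) red_map ?(red_pat pq') //.
apply: smono_nth; first exact: vals_sorted.
apply/allP => x xq; rewrite (size_vals pq sq rw) ltnS -hm -(pat_mem _ pq' sq') //.
Qed.

Lemma back r q q' An es n j : is_pattern r q -> is_pattern r q' -> 0 < r -> non_overlapping q ->
  good r q An es n -> nth 0 q' 0 = nth 0 q 0 -> nth 0 q' r.-1 = nth 0 q r.-1 ->
  pmax q' = pmax q -> j < n ->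
  newval r q An (map (newval r q' An es) (iota 0 n)) j = nth 0 es j.
Proof.
move=> pq pq' r0 no g h0 hl hm jn.
have sq' : 0 < size q' by case/and3P: pq' => /eqP ->.
have sq : 0 < size q by case/and3P: pq => /eqP ->.
rewrite {1}/newval; case: ifP => cv; last first.
  by rewrite (nth_map 0) ?size_iota // nth_iota // /newval cv.
have [cA /andP [h1 h2]] := ch_spec cv; move: cA h1 h2; set c := ch r An j => cA h1 h2.
have [kr rw] := good_occ g cA.
rewrite (newwin pq pq' r0 no g h0 hl cA) vals_map; last first.
  apply: smono_nth; first exact: vals_sorted.
  apply/allP => x xq; rewrite (size_vals pq sq rw) ltnS -hm -(pat_mem _ pq' sq') //.
rewrite (vals_pat pq' sq') hm -(size_vals pq sq rw) map_nth_iota0 // take_size.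
rewrite -(win_entry pq r0 g cA); first by congr nth; lia.
lia.
Qed.

Definition occT n (q : seq nat) (e : n.-tuple 'I_n) : {set 'I_n} :=
  [set k : 'I_n | occurs_at q (map val e) k.+1].
Definition Xs n q (A : {set 'I_n}) :=
  [pred e : n.-tuple 'I_n | is_invseq e && (A \subset occT q e)].
Definition An n (A : {set 'I_n}) : seq nat := [seq val k | k <- enum A].
Definition Phi n r q' (A : {set 'I_n}) (e : n.-tuple 'I_n) : n.-tuple 'I_n :=
  [tuple insubd (tnth e i) (newval r q' (An A) (map val e) i) | i < n].

Lemma nth_val n (e : n.-tuple 'I_n) j (jn : j < n) : nth 0 (map val e) j = val (tnth e (Ordinal jn)).
Proof. by rewrite (nth_map (tnth e (Ordinal jn))) ?size_tuple // [in RHS](tnth_nth (tnth e (Ordinal jn))). Qed.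

Lemma Xgood n r q (A : {set 'I_n}) e : size q = r ->
  (e \in Xs q A) = good r q (An A) (map val e) n.
Proof.
move=> sq; rewrite /good inE size_map size_tuple eqxx /=; congr andb.
  apply/forallP/allP => [h j|h k].
    rewrite mem_iota add0n => jn; rewrite (nth_val e jn); exact: h.
  have := h k; rewrite mem_iota add0n ltn_ord (nth_val e (ltn_ord k)) /= => /(_ isT).
  by have -> : Ordinal (ltn_ord k) = k by apply: val_inj.
apply/subsetP/allP => [h k|h k kA].
  case/mapP => i; rewrite mem_enum => iA ->; have := h i iA; rewrite inE /occurs_at sq size_map size_tuple /=.
  by rewrite /win; have -> : i.+1 + r - 1 = i + r by lia.
have := h (val k); rewrite map_f ?mem_enum // => /(_ isT) /andP [h1 h2].
rewrite inE /occurs_at sq size_map size_tuple /=; have -> : k.+1 + r - 1 = k + r by lia.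
by rewrite h1 h2.
Qed.


Lemma Phi_val n r q q' (A : {set 'I_n}) e : is_pattern r q -> 0 < r -> size q = r ->
  [forall i : 'I_(size q), nth 0 q' i <= \max_(j < size q)
                         (if j <= i then nth 0 q j else nth 0 q j - (j - i))] ->
  e \in Xs q A -> map val (Phi r q' A e) = map (newval r q' (An A) (map val e)) (iota 0 n).
Proof.
move=> pq r0 sq chg eX; have g := eX; rewrite (Xgood _ _ sq) in g.
apply: (@eq_from_nth _ 0); first by rewrite size_map size_tuple size_map size_iota.
move=> j; rewrite size_map size_tuple => jn.
rewrite (nth_val _ jn) (nth_map 0) ?size_iota // nth_iota // tnth_mktuple val_insubd /=.
by have := newval_le pq r0 g chg jn => h; rewrite (leq_ltn_trans h jn).
Qed.

Lemma F_le n r q q' (A : {set 'I_n}) : is_pattern r q -> is_pattern r q' -> 0 < r ->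
  non_overlapping q -> nth 0 q' 0 = nth 0 q 0 -> nth 0 q' r.-1 = nth 0 q r.-1 ->
  pmax q' = pmax q ->
  [forall i : 'I_(size q), nth 0 q' i <= \max_(j < size q)
                         (if j <= i then nth 0 q j else nth 0 q j - (j - i))] ->
  #|Xs q A| <= #|Xs q' A|.
Proof.
move=> pq pq' r0 no h0 hl hm chg.
have sq : size q = r by case/and3P: pq => /eqP.
have sq' : size q' = r by case/and3P: pq' => /eqP.
have inX : forall e, e \in Xs q A -> Phi r q' A e \in Xs q' A.
  move=> e eX; have g := eX; rewrite (Xgood _ _ sq) in g.
  rewrite (Xgood _ _ sq') (Phi_val pq r0 sq chg eX) /good size_map size_iota eqxx /=.
  apply/andP; split.
    apply/allP => j; rewrite mem_iota add0n => jn.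
    rewrite (nth_map 0) ?size_iota // nth_iota //.
    exact: newval_le pq r0 g chg jn.
  apply/allP => k kA; have [kr _] := good_occ g kA; rewrite kr /=.
  by rewrite (newocc pq pq' r0 no g h0 hl hm kA).
have bk : forall e, e \in Xs q A -> Phi r q A (Phi r q' A e) = e.
  move=> e eX; have g := eX; rewrite (Xgood _ _ sq) in g.
  apply: eq_from_tnth => i; apply: val_inj.
  rewrite tnth_mktuple val_insubd (Phi_val pq r0 sq chg eX).
  rewrite (back pq pq' r0 no g h0 hl hm (ltn_ord i)) (nth_val e (ltn_ord i)).
  have -> : Ordinal (ltn_ord i) = i by apply: val_inj.
  by rewrite ltn_ord.
rewrite -(card_in_imset (f := Phi r q' A)); last first.
  by move=> x y xX yX e; rewrite -(bk x xX) -(bk y yX) e.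
apply: subset_leq_card; apply/subsetP => y /imsetP [x xX ->]; exact: inX.
Qed.

Definition G n q (A : {set 'I_n}) :=
  #|[pred e : n.-tuple 'I_n | is_invseq e && (occT q e == A)]|.

Lemma F_sum n q (A : {set 'I_n}) : #|Xs q A| = \sum_(B : {set 'I_n} | A \subset B) G q B.
Proof.
rewrite -sum1_card (partition_big (occT q) (fun B => A \subset B)); last first.
  by move=> e; rewrite inE => /andP [].
apply: eq_bigr => B AB; rewrite /G -sum1_card; apply: eq_bigl => e.
rewrite !inE; case: (eqVneq (occT q e) B) => [->|]; by rewrite ?AB ?andbT ?andbF.
Qed.

Lemma G_eq n q q' : (forall A : {set 'I_n}, #|Xs q A| = #|Xs q' A|) ->
  forall A : {set 'I_n}, G q A = G q' A.
Proof.
move=> hF.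
suff H : forall m (A : {set 'I_n}), #|~: A| < m -> G q A = G q' A.
  by move=> A; apply: (H #|~: A|.+1).
elim=> [//|m IH] A hA.
have e1 := F_sum q A; have e2 := F_sum q' A.
rewrite (bigD1 A) ?subxx //= in e1; rewrite (bigD1 A) ?subxx //= in e2.
have := hF A; rewrite e1 e2 (eq_bigr (fun B => G q' B)); first by move/eqP; rewrite eqn_add2r => /eqP.
move=> B /andP [AB BA]; apply: IH.
have pr : A \proper B by rewrite properEneq eq_sym BA AB.
rewrite -properC in pr; have := proper_card pr; lia.
Qed.

Lemma Em_eq p n (e : n.-tuple 'I_n) T :
  (Em p (map val e) == T) =
  (T == [seq i <- iota 1 n | i \in T]) && (occT p e == [set k : 'I_n | k.+1 \in T]).
Proof.
rewrite /Em size_map size_tuple.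
apply/eqP/andP => [<- | [/eqP hT /eqP hO]].
  split; apply/eqP.
    by apply: eq_in_filter => i ii; rewrite mem_filter ii andbT.
  apply/setP => k; rewrite !inE mem_filter mem_iota add1n !ltnS ltn_ord /= andbT //.
rewrite [RHS]hT; apply: eq_in_filter => i; rewrite mem_iota => /andP [i1 i2].
have ik : i.-1 < n by lia.
have := congr1 (fun S : {set 'I_n} => Ordinal ik \in S) hO; rewrite !inE /=.
by have -> : i.-1.+1 = i by lia.
Qed.

Lemma count_G p n T : count_Em p n T =
  if T == [seq i <- iota 1 n | i \in T] then G p [set k : 'I_n | k.+1 \in T] else 0.
Proof.
rewrite /count_Em; case: ifP => c.
  by apply: eq_card => e; rewrite !inE Em_eq c.
by apply: eq_card0 => e; rewrite !inE Em_eq c andbF.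
Qed.

Theorem mainTheorem3 (r : nat) (p p' : seq nat) :
  is_pattern r p -> is_pattern r p' ->
  non_overlapping p -> non_overlapping p' ->
  interchangeable p p' ->
  super_strongly_Wilf_equiv p p'.
Proof.
move=> pp pp' no no' /andP [c1 c2] n T.
have sp : size p = r by case/and3P: pp => /eqP.
have sp' : size p' = r by case/and3P: pp' => /eqP.
case: (posnP r) => r0.
  move: sp sp'; rewrite r0 => /size0nil -> /size0nil -> //.
case/and5P: c1 => _ /eqP hh1 /eqP hl1 /eqP hm1 ch1.
case/and5P: c2 => _ _ _ _ ch2.
have h0 : nth 0 p' 0 = nth 0 p 0 by rewrite !nth0.
have hl : nth 0 p' r.-1 = nth 0 p r.-1.
  have : nth 0 p' (size p').-1 = nth 0 p (size p).-1 by rewrite !nth_last.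
  by rewrite sp sp'.
have hF : forall A : {set 'I_n}, #|Xs p A| = #|Xs p' A|.
  move=> A; apply/eqP; rewrite eqn_leq; apply/andP; split.
    exact: F_le pp pp' r0 no h0 hl (esym hm1) ch1.
  exact: F_le pp' pp r0 no' (esym h0) (esym hl) hm1 ch2.
by rewrite !count_G (G_eq hF).
Qed.
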